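(* Let $(\bm M_s)$ be a sequence of parameters with $\bm M_s\in\mathcal M$ for every index $s$. Then for every $t$ and every $k=1,\dots,2H$, $$\|\Phi^x_k(\bm M_{t-H:t-1})\|_2\le\kappa^2(1-\gamma)^{k-1}\mathds1_{(k\le H)}+\phi H(1-\gamma)^{k-2}\mathds1_{(k\ge2)},$$ $$\|\Phi^u_k(\bm M_{t-H:t})\|_2\le\kappa^3(1-\gamma)^{k-1}\mathds1_{(k\le H)}(2\sqrt{nm}+1)+\kappa\phi H(1-\gamma)^{k-2}\mathds1_{(k\ge2)},$$ where $\phi=2\kappa^5\kappa_B\sqrt{mn}$.
   Context: $A\in\mathbb R^{n\times n}$, $B\in\mathbb R^{n\times m}$; matrix $\|\cdot\|_\infty$ = max absolute row sum, $\|\cdot\|_2$ spectral norm. For $\kappa\ge1$, $\gamma\in(0,1]$, $K$ is $(\kappa,\gamma)$-strongly stable if $A-BK=Q^{-1}LQ$ with $\|L\|_2\le1-\gamma$ and $\max(\|Q\|_2,\|Q^{-1}\|_2,\|K\|_2)\le\kappa$; $\kappa_B=\max(\|B\|_2,1)$. Fix a $(\kappa,\gamma)$-strongly stable $\mathbb K$, $A_{\mathbb K}=A-B\mathbb K$, and $H\ge1$. A parameter is a list $\bm M=(M^{[1]},\dots,M^{[H]})$, $M^{[i]}\in\mathbb R^{m\times n}$; $\mathcal M=\{\bm M:\|M^{[i]}\|_\infty\le2\sqrt n\kappa^3(1-\gamma)^{i-1},\ 1\le i\le H\}$. For a time-indexed sequence of parameters, $\Phi^x_k(\bm M_{t-H:t-1})=A_{\mathbb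 K}^{k-1}\mathds1_{(k\le H)}+\sum_{i=1}^HA_{\mathbb K}^{i-1}BM_{t-i}^{[k-i]}\mathds1_{(1\le k-i\le H)}$ and $\Phi^u_k(\bm M_{t-H:t})=M_t^{[k]}\mathds1_{(k\le H)}-\mathbb K\Phi^x_k(\bm M_{t-H:t-1})$; $\mathds1_{(\cdot)}$ is the indicator (terms with indicator $0$ are omitted). *)

(* Defs.v *)
From HB Require Import structures.
From mathcomp Require Import all_boot all_order all_algebra.
From mathcomp Require Import classical_sets reals.
Set Implicit Arguments. Unset Strict Implicit. Unset Printing Implicit Defensive.
Import Order.TTheory GRing.Theory Num.Theory.
Local Open Scope ring_scope.
Local Open Scope classical_set_scope.

Section Defs.
Variable R : realType.

Definition vnorm2 p (x : 'cV[R]_p) : R := Num.sqrt (\sum_i (x i 0) ^+ 2).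

Definition norm2 p q (A : 'M[R]_(p, q)) : R :=
  sup [set r | exists x : 'cV[R]_q, vnorm2 x <= 1 /\ r = vnorm2 (A *m x)].

Definition norminf p q (A : 'M[R]_(p, q)) : R :=
  \big[Num.max/0]_(i < p) \sum_(j < q) `|A i j|.

Definition strongly_stable n m (A : 'M[R]_n) (B : 'M[R]_(n, m))
    (K : 'M[R]_(m, n)) (kappa gamma : R) : Prop :=
  exists (Q L : 'M[R]_n),
    [/\ Q \in unitmx, A - B *m K = invmx Q *m L *m Q,
        norm2 L <= 1 - gamma &
        [/\ norm2 Q <= kappa, norm2 (invmx Q) <= kappa & norm2 K <= kappa]].

Definition kappaB n m (B : 'M[R]_(n, m)) : R := Num.max (norm2 B) 1.

(* A parameter is a list M^{[1]},...,M^{[H]}; we model it as a function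
   nat -> 'M_(m,n) of which only the indices 1..H are used.
   A time-indexed sequence of parameters is Ms : int -> nat -> 'M_(m,n),
   Ms s i = M_s^{[i]}. *)
Definition in_calM n m (H : nat) (kappa gamma : R) (M : nat -> 'M[R]_(m, n)) :=
  forall i, (1 <= i <= H)%N ->
    norminf (M i) <= 2 * Num.sqrt n%:R * kappa ^+ 3 * (1 - gamma) ^+ i.-1.

Definition Phix n m (AK : 'M[R]_n) (B : 'M[R]_(n, m)) (H : nat)
    (Ms : int -> nat -> 'M[R]_(m, n)) (t : int) (k : nat) : 'M[R]_n :=
  (if (k <= H)%N then AK ^+ k.-1 else 0)
  + \sum_(1 <= i < H.+1 | (1 <= k - i <= H)%N)
       AK ^+ i.-1 *m B *m Ms (t - i%:Z) (k - i)%N.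

Definition Phiu n m (AK : 'M[R]_n) (B : 'M[R]_(n, m)) (K : 'M[R]_(m, n))
    (H : nat) (Ms : int -> nat -> 'M[R]_(m, n)) (t : int) (k : nat)
    : 'M[R]_(m, n) :=
  (if (k <= H)%N then Ms t k else 0) - K *m Phix AK B H Ms t k.

End Defs.

(* Main.v *)
Require Import Defs.
From HB Require Import structures.
From mathcomp Require Import all_boot all_order all_algebra.
From mathcomp Require Import classical_sets reals.
From mathcomp Require Import ring lra zify.
Import Order.TTheory GRing.Theory Num.Theory.
Set Implicit Arguments. Unset Strict Implicit. Unset Printing Implicit Defensive.
Local Open Scope ring_scope.

Section Norms.
Variable R : realType.

Definition ssq p (x : 'cV[R]_p) : R := \sum_i (x i 0) ^+ 2.

Lemma ssq_ge0 p (x : 'cV[R]_p) : 0 <= ssq x.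
Proof. by apply: sumr_ge0 => i _; rewrite sqr_ge0. Qed.

Lemma vnorm2_ge0 p (x : 'cV[R]_p) : 0 <= vnorm2 x.
Proof. exact: sqrtr_ge0. Qed.

Lemma vnorm2_sq p (x : 'cV[R]_p) : vnorm2 x ^+ 2 = ssq x.
Proof. by rewrite /vnorm2 sqr_sqrtr // ssq_ge0. Qed.

Lemma vnorm2_0_entries p (x : 'cV[R]_p) : vnorm2 x = 0 -> forall i, x i 0 = 0.
Proof.
move=> h i.
have hs : ssq x = 0 by rewrite -vnorm2_sq h expr0n.
have := @psumr_eq0P R _ xpredT (fun i => x i 0 ^+ 2) (fun i _ => sqr_ge0 _) hs i isT.
by move/eqP; rewrite sqrf_eq0 => /eqP.
Qed.

Lemma vnorm2_eq0 p (x : 'cV[R]_p) : vnorm2 x = 0 -> x = 0.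
Proof.
move=> h; apply/matrixP => i j; rewrite ord1 mxE; exact: vnorm2_0_entries.
Qed.

Lemma vnorm2_zero p : vnorm2 (0 : 'cV[R]_p) = 0.
Proof.
rewrite /vnorm2 big1 ?sqrtr0 // => i _; by rewrite mxE expr0n.
Qed.

Lemma entry_le p (x : 'cV[R]_p) j : `|x j 0| <= vnorm2 x.
Proof.
rewrite -sqrtr_sqr /vnorm2; apply: ler_wsqrtr.
rewrite (bigD1 j) //=; rewrite lerDl; apply: sumr_ge0 => i _; exact: sqr_ge0.
Qed.

Lemma cauchy_schwarz p (x y : 'cV[R]_p) :
  \sum_i x i 0 * y i 0 <= vnorm2 x * vnorm2 y.
Proof.
set a := vnorm2 x; set b := vnorm2 y.
have [a0|] := eqVneq a 0.
  rewrite a0 mul0r big1 // => i _; by rewrite (vnorm2_0_entries a0) mul0r.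
have [b0|] := eqVneq b 0.
  rewrite b0 mulr0 big1 // => i _; by rewrite (vnorm2_0_entries b0) mulr0.
move=> bn0 an0.
have ha : 0 < a by rewrite lt_def an0 vnorm2_ge0.
have hb : 0 < b by rewrite lt_def bn0 vnorm2_ge0.
have key : \sum_i (2 * a * b) * (x i 0 * y i 0)
    <= \sum_i (b ^+ 2 * x i 0 ^+ 2 + a ^+ 2 * y i 0 ^+ 2).
  apply: ler_sum => i _.
  have := sqr_ge0 (b * x i 0 - a * y i 0); nra.
rewrite -mulr_sumr big_split /= -!mulr_sumr in key.
have e1 : \sum_i x i 0 ^+ 2 = a ^+ 2 by rewrite vnorm2_sq.
have e2 : \sum_i y i 0 ^+ 2 = b ^+ 2 by rewrite vnorm2_sq.
rewrite e1 e2 in key.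
set S := \sum_i x i 0 * y i 0 in key *.
have hab : 0 < a * b by exact: mulr_gt0.
nra.
Qed.

Lemma vnorm2_add p (x y : 'cV[R]_p) : vnorm2 (x + y) <= vnorm2 x + vnorm2 y.
Proof.
rewrite {1}/vnorm2.
have h : \sum_i (x + y) i 0 ^+ 2 <= (vnorm2 x + vnorm2 y) ^+ 2.
  have -> : \sum_i (x + y) i 0 ^+ 2 =
      \sum_i x i 0 ^+ 2 + 2 * \sum_i x i 0 * y i 0 + \sum_i y i 0 ^+ 2.
    rewrite mulr_sumr -!big_split /=; apply: eq_bigr => i _; rewrite mxE; ring.
  have := cauchy_schwarz x y; have := vnorm2_sq x; have := vnorm2_sq y.
  rewrite /ssq; lra.
apply: le_trans (ler_wsqrtr h) _.
by rewrite sqrtr_sqr ger0_norm // addr_ge0 // vnorm2_ge0.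
Qed.

Lemma vnorm2_scale p c (x : 'cV[R]_p) : vnorm2 (c *: x) = `|c| * vnorm2 x.
Proof.
rewrite /vnorm2.
have -> : \sum_i (c *: x) i 0 ^+ 2 = c ^+ 2 * \sum_i x i 0 ^+ 2.
  rewrite mulr_sumr; apply: eq_bigr => i _; rewrite mxE; ring.
by rewrite sqrtrM ?sqr_ge0 // sqrtr_sqr.
Qed.

Lemma vnorm2_opp p (x : 'cV[R]_p) : vnorm2 (- x) = vnorm2 x.
Proof. by rewrite -scaleN1r vnorm2_scale normrN normr1 mul1r. Qed.

End Norms.

Section Norm2.
Variable R : realType.

Lemma norminf_ge p q (A : 'M[R]_(p, q)) i : \sum_j `|A i j| <= norminf A.
Proof. rewrite /norminf; exact: (le_bigmax (0:R) (fun i => \sum_j `|A i j|) i). Qed.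

Lemma norminf_ge0 p q (A : 'M[R]_(p, q)) : 0 <= norminf A.
Proof. rewrite /norminf; exact: bigmax_ge_id. Qed.

Lemma bound_inf p q (A : 'M[R]_(p, q)) (x : 'cV[R]_q) : vnorm2 x <= 1 ->
  vnorm2 (A *m x) <= Num.sqrt p%:R * norminf A.
Proof.
move=> hx; set N := norminf A.
have hi : forall i, `|(A *m x) i 0| <= N.
  move=> i; rewrite mxE; apply: le_trans (ler_norm_sum _ _ _) _.
  apply: le_trans (norminf_ge A i); apply: ler_sum => j _.
  rewrite normrM; apply: ler_piMr => //.
  exact: le_trans (entry_le x j) hx.
have hN := norminf_ge0 A.
have h : \sum_i (A *m x) i 0 ^+ 2 <= p%:R * N ^+ 2.
  have -> : p%:R * N ^+ 2 = \sum_(i < p) N ^+ 2.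
    by rewrite sumr_const card_ord mulr_natl.
  apply: ler_sum => i _; rewrite -real_normK ?num_real //.
  have := hi i; have := normr_ge0 ((A *m x) i 0); nra.
apply: le_trans (ler_wsqrtr h) _.
by rewrite sqrtrM // sqrtr_sqr ger0_norm.
Qed.

Definition nset p q (A : 'M[R]_(p, q)) :=
  ([set r | exists x : 'cV[R]_q, vnorm2 x <= 1 /\ r = vnorm2 (A *m x)])%classic.

Lemma nset_ne p q (A : 'M[R]_(p, q)) : (nset A !=set0)%classic.
Proof. exists (vnorm2 (A *m 0)); exists 0; split => //; rewrite vnorm2_zero ler01 //. Qed.

Lemma nset_ub p q (A : 'M[R]_(p, q)) : has_ubound (nset A).
Proof.
exists (Num.sqrt p%:R * norminf A) => r [x [hx ->]]; exact: bound_inf.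
Qed.

Lemma norm2_ub p q (A : 'M[R]_(p, q)) x : vnorm2 x <= 1 -> vnorm2 (A *m x) <= norm2 A.
Proof. move=> hx; apply: (ub_le_sup (nset_ub A)); by exists x. Qed.

Lemma norm2_le p q (A : 'M[R]_(p, q)) c :
  (forall x, vnorm2 x <= 1 -> vnorm2 (A *m x) <= c) -> norm2 A <= c.
Proof. move=> h; apply: ge_sup; first exact: nset_ne. by move=> r [x [hx ->]]; apply: h. Qed.

Lemma norm2_ge0 p q (A : 'M[R]_(p, q)) : 0 <= norm2 A.
Proof.
apply: le_trans (norm2_ub A (x := 0) _); first exact: vnorm2_ge0.
by rewrite vnorm2_zero ler01.
Qed.

Lemma norm2_inf p q (A : 'M[R]_(p, q)) : norm2 A <= Num.sqrt p%:R * norminf A.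
Proof. apply: norm2_le => x; exact: bound_inf. Qed.

Lemma norm2_apply p q (A : 'M[R]_(p, q)) x : vnorm2 (A *m x) <= norm2 A * vnorm2 x.
Proof.
have [v0|vn0] := eqVneq (vnorm2 x) 0.
  rewrite v0 mulr0 (vnorm2_eq0 v0) mulmx0 vnorm2_zero //.
set v := vnorm2 x.
have hv : 0 < v by rewrite lt_def vn0 vnorm2_ge0.
have h1 : vnorm2 (v^-1 *: x) <= 1.
  rewrite vnorm2_scale ger0_norm ?invr_ge0 ?(ltW hv) // mulVf ?lexx //.
have := norm2_ub A h1.
rewrite -scalemxAr vnorm2_scale ger0_norm ?invr_ge0 ?(ltW hv) //.
by rewrite -ler_pdivlMl ?invr_gt0 // invrK mulrC.
Qed.

Lemma norm2_mul p q r (A : 'M[R]_(p, q)) (B : 'M[R]_(q, r)) :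
  norm2 (A *m B) <= norm2 A * norm2 B.
Proof.
apply: norm2_le => x hx; rewrite -mulmxA.
apply: le_trans (norm2_apply _ _) _; apply: ler_wpM2l; first exact: norm2_ge0.
apply: le_trans (norm2_apply _ _) _.
by apply: ler_piMr => //; exact: norm2_ge0.
Qed.

Lemma norm2_add p q (A B : 'M[R]_(p, q)) : norm2 (A + B) <= norm2 A + norm2 B.
Proof.
apply: norm2_le => x hx; rewrite mulmxDl.
apply: le_trans (vnorm2_add _ _) _; apply: lerD; exact: norm2_ub.
Qed.

Lemma norm2_opp p q (A : 'M[R]_(p, q)) : norm2 (- A) <= norm2 A.
Proof. apply: norm2_le => x hx; rewrite mulNmx vnorm2_opp; exact: norm2_ub. Qed.

Lemma norm2_sub p q (A B : 'M[R]_(p, q)) : norm2 (A - B) <= norm2 A + norm2 B.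
Proof. apply: le_trans (norm2_add _ _) _; apply: lerD => //; exact: norm2_opp. Qed.

Lemma norm2_zero p q : norm2 (0 : 'M[R]_(p, q)) <= 0.
Proof. apply: norm2_le => x _; by rewrite mul0mx vnorm2_zero. Qed.

Lemma norm2_one p : norm2 (1%:M : 'M[R]_p) <= 1.
Proof. apply: norm2_le => x hx; by rewrite mul1mx. Qed.

Lemma norm2_sum p q (I : Type) (r : seq I) (P : pred I) (F : I -> 'M[R]_(p, q)) :
  norm2 (\sum_(i <- r | P i) F i) <= \sum_(i <- r | P i) norm2 (F i).
Proof.
apply: (big_rec2 (fun a b => norm2 b <= a)); first exact: norm2_zero.
move=> i y1 y2 _ h; apply: le_trans (norm2_add _ _) _; exact: lerD.
Qed.

End Norm2.

Lemma eqle (R : realType) (x y : R) : x = y -> x <= y.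
Proof. by move=> ->. Qed.

Theorem lemma13 (R : realType) (n m : nat) (A : 'M[R]_n) (B : 'M[R]_(n, m))
  (K : 'M[R]_(m, n)) (kappa gamma : R) (H : nat)
  (Ms : int -> nat -> 'M[R]_(m, n)) :
  1 <= kappa -> 0 < gamma -> gamma <= 1 -> (1 <= H)%N ->
  strongly_stable A B K kappa gamma ->
  (forall s, in_calM H kappa gamma (Ms s)) ->
  let phi := 2 * kappa ^+ 5 * kappaB B * Num.sqrt (m%:R * n%:R) in
  forall (t : int) (k : nat), (1 <= k <= 2 * H)%N ->
    norm2 (Phix (A - B *m K) B H Ms t k)
      <= (if (k <= H)%N then kappa ^+ 2 * (1 - gamma) ^+ k.-1 else 0)
         + (if (2 <= k)%N then phi * H%:R * (1 - gamma) ^+ (k - 2) else 0)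
    /\
    norm2 (Phiu (A - B *m K) B K H Ms t k)
      <= (if (k <= H)%N then
            kappa ^+ 3 * (1 - gamma) ^+ k.-1
              * (2 * Num.sqrt (n%:R * m%:R) + 1) else 0)
         + (if (2 <= k)%N then kappa * phi * H%:R * (1 - gamma) ^+ (k - 2)
            else 0).
Proof.
move=> hk hg0 hg1 hH [Q [L [hQ hE hL [hQn hQi hK]]]] hM phi t k hk12.
set AK := A - B *m K.
have hk0 : 0 <= kappa by apply: le_trans hk; exact: ler01.
have hg : 0 <= 1 - gamma by rewrite subr_ge0.
have hLj : forall j, norm2 (L ^+ j) <= (1 - gamma) ^+ j.
  elim=> [|j IH]; first by rewrite expr0; exact: norm2_one.
  rewrite exprS -mulmxE exprS; apply: le_trans (norm2_mul _ _) _.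
  by apply: ler_pM => //; exact: norm2_ge0.
have hAKj : forall j, AK ^+ j = invmx Q *m L ^+ j *m Q.
  elim=> [|j IH].
    by rewrite !expr0 mulmx1 mulVmx.
  rewrite exprS IH /AK hE -mulmxE exprS -mulmxE !mulmxA.
  by rewrite -(mulmxA (invmx Q *m L) Q) mulmxV // mulmx1.
have hpow : forall j, norm2 (AK ^+ j) <= kappa ^+ 2 * (1 - gamma) ^+ j.
  move=> j; rewrite hAKj; apply: le_trans (norm2_mul _ _) _.
  apply: le_trans (ler_wpM2r (norm2_ge0 _) (norm2_mul _ _)) _.
  have -> : kappa ^+ 2 * (1 - gamma) ^+ j = kappa * (1 - gamma) ^+ j * kappa by ring.
  apply: ler_pM => //; first by apply: mulr_ge0; exact: norm2_ge0.
    exact: norm2_ge0.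
  by apply: ler_pM => //; exact: norm2_ge0.
have hsm := sqrtr_ge0 (m%:R : R).
have hsn := sqrtr_ge0 (n%:R : R).
have hmn : Num.sqrt (m%:R * n%:R : R) = Num.sqrt m%:R * Num.sqrt n%:R by rewrite sqrtrM.
have hnm : Num.sqrt (n%:R * m%:R : R) = Num.sqrt m%:R * Num.sqrt n%:R
  by rewrite sqrtrM // mulrC.
have hMb : forall s j, (1 <= j <= H)%N -> norm2 (Ms s j) <=
    Num.sqrt m%:R * (2 * Num.sqrt n%:R * kappa ^+ 3 * (1 - gamma) ^+ j.-1).
  move=> s j hj; apply: le_trans (norm2_inf _) _; apply: ler_wpM2l => //.
  exact: hM.
have hB : norm2 B <= kappaB B by rewrite /kappaB le_max lexx.
have hB0 : 0 <= kappaB B by rewrite /kappaB le_max ler01 orbT.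
have hx : norm2 (Phix AK B H Ms t k)
      <= (if (k <= H)%N then kappa ^+ 2 * (1 - gamma) ^+ k.-1 else 0)
         + (if (2 <= k)%N then phi * H%:R * (1 - gamma) ^+ (k - 2) else 0).
  rewrite /Phix; apply: le_trans (norm2_add _ _) _; apply: lerD.
    by case: ifP => _; [exact: hpow | exact: norm2_zero].
  apply: le_trans (norm2_sum _ _ _) _.
  case: ifP => hk2; last first.
    rewrite big_nat_cond big1 // => i /andP[/andP[hi1 _] /andP[hi2 _]].
    exfalso; move/negbT: hk2; move: hi1 hi2; clear; lia.
  set c := phi * (1 - gamma) ^+ (k - 2).
  have hc : 0 <= c.
    rewrite /c /phi; apply: mulr_ge0; last exact: exprn_ge0.
    apply: mulr_ge0; last exact: sqrtr_ge0.
    by apply: mulr_ge0 => //; apply: mulr_ge0 => //; exact: exprn_ge0.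
  rewrite big_nat_cond.
  apply: (@le_trans _ _ (\sum_(1 <= i < H.+1) c)).
    rewrite [X in X <= _]big_mkcond.
    apply: ler_sum => i _; case: ifP => [/andP[hr hP] | _]; last exact: hc.
    move: hr hP => /andP[hi1 hi2] /andP[hki1 hki2].
    apply: le_trans (norm2_mul _ _) _.
    apply: le_trans (ler_wpM2r (norm2_ge0 _) (norm2_mul _ _)) _.
    apply: (@le_trans _ _ ((kappa ^+ 2 * (1 - gamma) ^+ i.-1) * kappaB B *
        (Num.sqrt m%:R * (2 * Num.sqrt n%:R * kappa ^+ 3 * (1 - gamma) ^+ (k - i).-1)))).
      apply: ler_pM; first by apply: mulr_ge0; exact: norm2_ge0.
          exact: norm2_ge0.
        by apply: ler_pM; [exact: norm2_ge0 | exact: norm2_ge0 | exact: hpow | exact: hB].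
      by apply: hMb; rewrite hki1 hki2.
    have e : (k - 2 = i.-1 + (k - i).-1)%N by move: hi1 hki1; clear; lia.
    rewrite /c /phi e exprD hmn; apply: eqle; ring.
  rewrite sumr_const_nat subn1 /=.
  have -> : phi * H%:R * (1 - gamma) ^+ (k - 2) = c *+ H by rewrite /c -mulr_natr; ring.
  exact: lexx.
split; first exact: hx.
rewrite /Phiu -/AK; apply: le_trans (norm2_sub _ _) _.
have h1 : norm2 (if (k <= H)%N then Ms t k else 0) <= (if (k <= H)%N then
    Num.sqrt m%:R * (2 * Num.sqrt n%:R * kappa ^+ 3 * (1 - gamma) ^+ k.-1) else 0).
  case: ifP => hkH; last exact: norm2_zero.
  apply: hMb; move: hk12 => /andP[-> _]; exact: hkH.
have h2 := le_trans (norm2_mul K _) (ler_pM (norm2_ge0 _) (norm2_ge0 _) hK hx).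
apply: le_trans (lerD h1 h2) _.
rewrite hnm; case: ifP => _; case: ifP => _; apply: eqle; ring.
Qed.
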